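(* Let $x_0\in\mathbb{R}$ and let $S:\mathbb{R}\to\mathbb{R}$ be a twice differentiable, decreasing function with $S''(\sigma)<0$ for all $\sigma$ (so $S$ is strictly concave downwards). Let $\{\Lambda_m\}_{m\in\mathbb{N}}$, $\{r_m\}_{m\in\mathbb{N}}$ and $I$ be as in the context. Let $(\mathcal{C}_{j,k})$ and $(\lambda_{j,k})$, indexed by $j\ge 0$, $k\in\mathbb{Z}$ with $|k-2^jx_0|<2^j$, be sequences of positive numbers such that: (i) for every $C\in\mathbb{R}$ and every choice of integers $k_j$ with $|k_j-2^jx_0|<2^j$, $$\limsup_{j\to+\infty}\left(\frac{\log_2(\mathcal{C}_{j,k_j})}{j}+C\,\frac{\log_2(\lambda_{j,k_j})}{j}\right)\le 0;$$ (ii) for every sequence of pairs $(j,k_j)\in I$ with $j\to+\infty$, $$\lim_{j\to+\infty}\frac{\log_2(\mathcal{C}_{j,k_j})}{j}=0\quad\text{and}\quad \lim_{j\to+\infty}\frac{\log_2(\lambda_{j,k_j})}{j}=0.$$ Let coefficients $c_{j,k}$ ($j\ge0$, $|k-2^jx_0|<2^j$) satisfy $$|c_{j,k}|\le \mathcal{C}_{j,k}\cdot\inf_{\sigma\in\mathbb{R}}\left\{2^{-jS(\sigma)}\left(\frac{1+|k-2^jx_0|}{\lambda_{j,k}}\right)^{S(\sigma)-\sigma}\right\},$$ with equality whenever $(j,k)\in I$. Let $\psi$ be a wavelet in the Schwartz class with all moments vanishing. Then the function (or distribution) defined near $x_0$ by $$f(x)=\sum_{j\ge0}\ \sum_{k\in\mathbb{Z},\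 |k-2^jx_0|<2^j} c_{j,k}\,\psi(2^jx-k)$$ has $S$ as its 2-microlocal frontier at $x_0$, i.e. $\sup\{s: f\in C^{s,\sigma-s}_{x_0}\}=S(\sigma)$ for every $\sigma\in\mathbb{R}$.
   Context: A wavelet is a function $\psi\in L^2(\mathbb{R})$ such that $\{2^{j/2}\psi(2^jx-k)\}_{j,k\in\mathbb{Z}}$ is an orthonormal basis of $L^2(\mathbb{R})$; the wavelet coefficients of $f$ are $c_{j,k}=2^{j/2}\langle f,\psi_{j,k}\rangle$ with $\psi_{j,k}(x)=2^{j/2}\psi(2^jx-k)$, so that $f=\sum c_{j,k}\psi(2^jx-k)$. For $s,s'\in\mathbb{R}$, the (local) 2-microlocal space $C^{s,s'}_{x_0}$ is defined as: $f\in C^{s,s'}_{x_0}$ iff there is $C>0$ with $|c_{j,k}|\le C\,2^{-js}(1+|k-2^jx_0|)^{-s'}$ for all $j\ge0$ and $k\in\mathbb{Z}$ with $|k/2^j-x_0|<1$ (the wavelet $\psi$ being Schwartz with all vanishing moments). The 2-microlocal frontier of $f$ at $x_0$ is the function $\sigma\mapsto\sup\{s: f\in C^{s,\sigma-s}_{x_0}\}$. Write $\mathbb{N}$ as a disjoint union $\mathbb{N}=\bigsqcup_{m\in\mathbb{N}}\Lambda_m$ of infinite sets $\Lambda_m$ (e.g. $\Lambda_m$ = natural numbers whose binary expansion has exactly $m$ ones). Let $\{r_m\}_{m\in\mathbb{N}}$ be a dense subset of $\mathrm{Im}\left(\frac{S'(\sigma)}{S'(\sigma)-1}\right)\subseteq[0,1]$.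 Define $$I=\{(j,k_j): j\in\Lambda_m \text{ for some } m,\ \text{and } [\,|k_j-2^jx_0|\,]=[2^{jr_m}]\},$$ where $[x]$ denotes the integer part of $x$. *)

(* Defs.v *)
From Stdlib Require Import Reals Lra ZArith.
Open Scope R_scope.

Definition log2 (x : R) : R := ln x / ln 2.

Definition in_dom (x0 : R) (j : nat) (k : Z) : Prop :=
  Rabs (IZR k - 2 ^ j * x0) < 2 ^ j.

(* Local 2-microlocal space C^{s,s'}_{x0}, stated on the wavelet coefficients
   c_{j,k} (j >= 0, |k/2^j - x0| < 1) as in the context. *)
Definition in_C2ml (c : nat -> Z -> R) (x0 s s' : R) : Prop :=
  exists K : R, 0 < K /\
    forall (j : nat) (k : Z), in_dom x0 j k ->
      Rabs (c j k) <= K * Rpower 2 (- (INR j * s))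
                        * Rpower (1 + Rabs (IZR k - 2 ^ j * x0)) (- s').

Definition frontier_is (c : nat -> Z -> R) (x0 : R) (S : R -> R) : Prop :=
  forall sigma : R, is_lub (fun s => in_C2ml c x0 s (sigma - s)) (S sigma).

Definition is_infimum (F : R -> R) (l : R) : Prop :=
  (forall sigma, l <= F sigma) /\
  (forall l', (forall sigma, l' <= F sigma) -> l' <= l).

(* mof j = m  iff  j \in Lambda_m : a partition of N into infinite sets *)
Definition infinite_partition (mof : nat -> nat) : Prop :=
  forall m N : nat, exists j : nat, (N <= j)%nat /\ mof j = m.

Definition in_I (mof : nat -> nat) (r : nat -> R) (x0 : R) (j : nat) (k : Z) : Prop :=
  Int_part (Rabs (IZR k - 2 ^ j * x0)) = Int_part (Rpower 2 (INR j * r (mof j))).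

Definition bound_fun (S : R -> R) (x0 : R) (j : nat) (k : Z) (lam : R) (sigma : R) : R :=
  Rpower 2 (- (INR j * S sigma))
  * Rpower ((1 + Rabs (IZR k - 2 ^ j * x0)) / lam) (S sigma - sigma).

(* Main.v *)
Require Import Defs.
From Stdlib Require Import Reals Lra Lia ZArith Classical ClassicalEpsilon.
Open Scope R_scope.


Lemma exp_le_mono x y : x <= y -> exp x <= exp y.
Proof. intros [H|H]; [left; apply exp_increasing; auto | subst; lra]. Qed.

Lemma exp_le_rev x y : exp x <= exp y -> x <= y.
Proof. intros H. destruct (Rle_or_lt x y); auto. apply exp_increasing in H0; lra. Qed.

Lemma ln2_pos : 0 < ln 2.
Proof. rewrite <- ln_1. apply ln_increasing; lra. Qed.

Lemma S1_nonpos (S S1 : R -> R)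
  (HS1 : forall sigma, derivable_pt_lim S sigma (S1 sigma))
  (Hdecr : forall a b, a <= b -> S b <= S a) x : S1 x <= 0.
Proof.
  destruct (Rle_or_lt (S1 x) 0) as [H|H]; auto.
  destruct (HS1 x (S1 x / 2)) as [d Hd]; [lra|].
  assert (Hp := cond_pos d).
  specialize (Hd (d/2)).
  assert (HH : Rabs ((S (x + d/2) - S x) / (d/2) - S1 x) < S1 x / 2).
  { apply Hd; [lra| rewrite Rabs_right; lra]. }
  assert (S (x + d/2) <= S x) by (apply Hdecr; lra).
  assert ((S (x + d/2) - S x) / (d/2) <= 0).
  { assert (0 < /(d/2)) by (apply Rinv_0_lt_compat; lra). unfold Rdiv; nra. }
  apply Rabs_def2 in HH. lra.
Qed.

Lemma S1_strict (S1 S2 : R -> R)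
  (HS2 : forall sigma, derivable_pt_lim S1 sigma (S2 sigma))
  (Hconc : forall sigma, S2 sigma < 0) a b : a < b -> S1 b < S1 a.
Proof.
  intros Hab.
  set (pr := fun x => exist (fun l => derivable_pt_abs S1 x l) (S2 x) (HS2 x) : derivable_pt S1 x).
  destruct (MVT_cor1 S1 a b pr Hab) as [c [Hc _]].
  unfold derive_pt, pr in Hc; simpl in Hc.
  specialize (Hconc c). nra.
Qed.

Lemma tangent (S S1 S2 : R -> R)
  (HS1 : forall sigma, derivable_pt_lim S sigma (S1 sigma))
  (HS2 : forall sigma, derivable_pt_lim S1 sigma (S2 sigma))
  (Hconc : forall sigma, S2 sigma < 0) x y : S y <= S x + S1 x * (y - x).
Proof.
  set (pr := fun x => exist (fun l => derivable_pt_abs S x l) (S1 x) (HS1 x) : derivable_pt S x).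
  destruct (Rtotal_order x y) as [H|[H|H]].
  - destruct (MVT_cor1 S x y pr H) as [c [Hc Hc2]].
    unfold derive_pt, pr in Hc; simpl in Hc.
    assert (S1 c < S1 x) by (apply (S1_strict S1 S2); tauto). nra.
  - subst; lra.
  - destruct (MVT_cor1 S y x pr H) as [c [Hc Hc2]].
    unfold derive_pt, pr in Hc; simpl in Hc.
    assert (S1 x < S1 c) by (apply (S1_strict S1 S2); tauto). nra.
Qed.


Definition hh (S : R -> R) (s' u : R) : R := - S s' + (S s' - s') * u.

Section L.
Variables (S S1 S2 : R -> R)
  (HS1 : forall sigma, derivable_pt_lim S sigma (S1 sigma))
  (HS2 : forall sigma, derivable_pt_lim S1 sigma (S2 sigma))
  (Hdecr : forall a b, a <= b -> S b <= S a)
  (Hconc : forall sigma, S2 sigma < 0).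

Definition rho a := S1 a / (S1 a - 1).

Lemma rho_eq a : rho a = 1 - / (1 - S1 a).
Proof. assert (S1 a <= 0) by (apply (S1_nonpos S S1); auto).
  unfold rho. field. split; lra. Qed.

Lemma rho_bounds a : 0 <= rho a < 1.
Proof. assert (H: S1 a <= 0) by (apply (S1_nonpos S S1); auto).
  rewrite rho_eq. assert (1 <= 1 - S1 a) by lra.
  assert (0 < / (1 - S1 a)) by (apply Rinv_0_lt_compat; lra).
  assert (/ (1 - S1 a) <= 1). { rewrite <- Rinv_1. apply Rinv_le_contravar; lra. }
  lra. Qed.

Lemma rho_lt a b : a < b -> rho a < rho b.
Proof. intros Hab. rewrite !rho_eq.
  assert (S1 b < S1 a) by (apply (S1_strict S1 S2); auto).
  assert (S1 a <= 0) by (apply (S1_nonpos S S1); auto).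
  assert (/ (1 - S1 b) < / (1 - S1 a)) by (apply Rinv_lt_contravar; nra).
  lra. Qed.

Lemma tangent_h a s' : hh S a (rho a) <= hh S s' (rho a).
Proof.
  assert (Ht := tangent S S1 S2 HS1 HS2 Hconc a s').
  assert (S1 a <= 0) by (apply (S1_nonpos S S1); auto).
  assert (E : hh S s' (rho a) - hh S a (rho a) = (- (S s' - S a) + S1 a * (s' - a)) / (1 - S1 a)).
  { unfold hh, rho. field. split; lra. }
  assert (0 < / (1 - S1 a)) by (apply Rinv_0_lt_compat; lra).
  assert (0 <= (- (S s' - S a) + S1 a * (s' - a)) / (1 - S1 a)).
  { unfold Rdiv. apply Rmult_le_pos; lra. }
  lra.
Qed.

Lemma hh_interp s' u p q : p <> q ->
  hh S s' u = ((q - u) * hh S s' p + (u - p) * hh S s' q) / (q - p).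
Proof. intros. unfold hh. field. lra. Qed.

Lemma Lcont sg eps : 0 < eps -> exists del, 0 < del /\
  forall u, Rabs (u - rho sg) < del -> forall s', hh S sg (rho sg) - eps <= hh S s' u.
Proof.
  intros Heps.
  set (p := rho sg). set (q2 := rho (sg + 1)). set (q1 := rho (sg - 1)).
  set (G := hh S sg p). set (G2 := hh S (sg+1) q2). set (G1 := hh S (sg-1) q1).
  assert (H2 : p < q2) by (apply rho_lt; lra).
  assert (H1 : q1 < p) by (apply rho_lt; lra).
  set (d2 := eps * (q2 - p) / (Rabs (G - G2) + 1)).
  set (d1 := eps * (p - q1) / (Rabs (G - G1) + 1)).
  assert (Hd2 : 0 < d2). { unfold d2. apply Rdiv_lt_0_compat; [nra|]. pose proof (Rabs_pos (G-G2)); lra. }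
  assert (Hd1 : 0 < d1). { unfold d1. apply Rdiv_lt_0_compat; [nra|]. pose proof (Rabs_pos (G-G1)); lra. }
  exists (Rmin (Rmin d1 d2) (Rmin (q2 - p) (p - q1))). split.
  { repeat apply Rmin_glb_lt; lra. }
  intros u Hu s'.
  assert (Hm1 := Rmin_l (Rmin d1 d2) (Rmin (q2 - p) (p - q1))).
  assert (Hm2 := Rmin_r (Rmin d1 d2) (Rmin (q2 - p) (p - q1))).
  assert (Hm3 := Rmin_l d1 d2). assert (Hm4 := Rmin_r d1 d2).
  assert (Hm5 := Rmin_l (q2 - p) (p - q1)). assert (Hm6 := Rmin_r (q2 - p) (p - q1)).
  apply Rabs_def2 in Hu.
  assert (T0 : G <= hh S s' p) by apply tangent_h.
  destruct (Rle_or_lt p u) as [Hpu|Hpu].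
  - assert (T2 : G2 <= hh S s' q2) by apply tangent_h.
    rewrite (hh_interp s' u p q2) by lra.
    assert (Hb : (u - p) * Rabs (G - G2) <= eps * (q2 - p)).
    { assert ((u - p) * (Rabs (G - G2) + 1) <= eps * (q2 - p)).
      { assert (u - p <= d2) by lra. unfold d2 in H.
        assert (0 < Rabs (G - G2) + 1) by (pose proof (Rabs_pos (G-G2)); lra).
        apply (Rmult_le_compat_r (Rabs (G - G2) + 1)) in H; [|lra].
        unfold Rdiv in H. rewrite Rmult_assoc, Rinv_l in H; lra. }
      nra. }
    assert (Hg : G - G2 <= Rabs (G - G2)) by apply Rle_abs.
    apply (Rmult_le_reg_r (q2 - p)); [lra|].
    unfold Rdiv. rewrite Rmult_assoc, Rinv_l by lra. rewrite Rmult_1_r.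
    assert ((q2 - u) * G <= (q2 - u) * hh S s' p) by (apply Rmult_le_compat_l; lra).
    assert ((u - p) * G2 <= (u - p) * hh S s' q2) by (apply Rmult_le_compat_l; lra).
    assert ((u - p) * (G - G2) <= (u - p) * Rabs (G - G2)) by (apply Rmult_le_compat_l; lra).
    nra.
  - assert (T1 : G1 <= hh S s' q1) by apply tangent_h.
    rewrite (hh_interp s' u q1 p) by lra.
    assert (Hb : (p - u) * Rabs (G - G1) <= eps * (p - q1)).
    { assert ((p - u) * (Rabs (G - G1) + 1) <= eps * (p - q1)).
      { assert (p - u <= d1) by lra. unfold d1 in H.
        assert (0 < Rabs (G - G1) + 1) by (pose proof (Rabs_pos (G-G1)); lra).
        apply (Rmult_le_compat_r (Rabs (G - G1) + 1)) in H; [|lra].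
        unfold Rdiv in H. rewrite Rmult_assoc, Rinv_l in H; lra. }
      nra. }
    assert (Hg : G - G1 <= Rabs (G - G1)) by apply Rle_abs.
    apply (Rmult_le_reg_r (p - q1)); [lra|].
    unfold Rdiv. rewrite Rmult_assoc, Rinv_l by lra. rewrite Rmult_1_r.
    assert ((p - u) * G1 <= (p - u) * hh S s' q1) by (apply Rmult_le_compat_l; lra).
    assert ((u - q1) * G <= (u - q1) * hh S s' p) by (apply Rmult_le_compat_l; lra).
    assert ((p - u) * (G - G1) <= (p - u) * Rabs (G - G1)) by (apply Rmult_le_compat_l; lra).
    nra.
Qed.
End L.


Lemma fin_Z (F : Z -> R) n : forall a, exists M, forall k, (a <= k <= a + Z.of_nat n)%Z -> F k <= M.
Proof.
  induction n as [|n IH]; intros a.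
  - exists (F a). intros k Hk. assert (k = a) by lia. subst; lra.
  - destruct (IH a) as [M HM]. exists (Rmax M (F (a + Z.of_nat (Datatypes.S n)))%Z).
    intros k Hk. destruct (Z.eq_dec k (a + Z.of_nat (Datatypes.S n))%Z) as [E|E].
    + subst. apply Rmax_r.
    + eapply Rle_trans; [apply HM; lia| apply Rmax_l].
Qed.

Lemma fin_dom x0 (F : Z -> R) j : exists M, forall k, in_dom x0 j k -> F k <= M.
Proof.
  set (lo := 2^j * x0 - 2^j). set (hi := 2^j * x0 + 2^j).
  destruct (fin_Z F (Z.to_nat (up hi - up lo)) (up lo)) as [M HM].
  exists M. intros k Hk. unfold in_dom in Hk. apply Rabs_def2 in Hk.
  apply HM. destruct (archimed lo) as [A1 A2]. destruct (archimed hi) as [B1 B2].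
  assert (IZR (up lo) - 1 < IZR k) by (unfold lo in *; lra).
  assert (IZR k < IZR (up hi)) by (unfold hi in *; lra).
  assert (IZR (up lo - 1) < IZR k) by (rewrite minus_IZR; simpl; lra).
  apply lt_IZR in H1. apply lt_IZR in H0. lia.
Qed.

Lemma fin_all x0 (F : nat -> Z -> R) N : exists M, forall j k, (j < N)%nat -> in_dom x0 j k -> F j k <= M.
Proof.
  induction N as [|N IH].
  - exists 0. intros; lia.
  - destruct IH as [M HM]. destruct (fin_dom x0 (F N) N) as [M' HM'].
    exists (Rmax M M'). intros j k Hj Hk. destruct (Nat.eq_dec j N).
    + subst. eapply Rle_trans; [apply HM'; auto| apply Rmax_r].
    + eapply Rle_trans; [apply HM; auto; lia| apply Rmax_l].
Qed.

Lemma dom_exists x0 j : exists k, in_dom x0 j k.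
Proof.
  exists (up (2^j * x0) - 1)%Z. unfold in_dom. rewrite minus_IZR.
  destruct (archimed (2^j*x0)). assert (1 <= 2^j) by (apply pow_R1_Rle; lra).
  apply Rabs_def1; simpl; lra.
Qed.

Lemma pow2_int j : exists z : Z, 2 ^ j = IZR z.
Proof. exists (2 ^ Z.of_nat j)%Z. rewrite <- pow_IZR. reflexivity. Qed.

Lemma I_exists x0 j (t : R) : (1 <= j)%nat -> 0 <= t < 2 ^ j ->
  exists k, in_dom x0 j k /\ Int_part (Rabs (IZR k - 2 ^ j * x0)) = Int_part t.
Proof.
  intros Hj Ht.
  set (n := Int_part t). destruct (base_Int_part t) as [N1 N2]. fold n in N1, N2.
  set (w := 2^j * x0 + IZR n + 1).
  exists (- up (- w))%Z. destruct (archimed (- w)) as [A1 A2].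
  rewrite opp_IZR.
  assert (Hn0 : (0 <= n)%Z).
  { assert (IZR (-1) < IZR n) by (simpl; lra). apply lt_IZR in H. lia. }
  apply IZR_le in Hn0.
  destruct (pow2_int j) as [z Hz].
  assert (Hnz : (n < z)%Z) by (apply lt_IZR; lra).
  assert (Hnz' : IZR n + 1 <= IZR z).
  { rewrite <- plus_IZR. apply IZR_le. lia. }
  assert (Hr1 : IZR n <= - IZR (up (- w)) - 2 ^ j * x0) by (unfold w in *; lra).
  assert (Hr2 : - IZR (up (- w)) - 2 ^ j * x0 < IZR n + 1) by (unfold w in *; lra).
  rewrite Rabs_right by lra. split.
  - unfold in_dom. rewrite opp_IZR, Rabs_right by lra. lra.
  - symmetry. apply Int_part_spec. lra.
Qed.


Lemma alg1 Lc Ll L1 lK J l2 Sp sg dl s : Lc + (-(J*Sp)*l2 + (Sp - (sg+dl))*(L1 + - Ll)) - (lK + (-(J*s)*l2 + -(sg-s)*L1)) = (Lc + (sg+dl-Sp)*Ll) + (Sp - s - dl)*L1 - (Sp - s)*(J*l2) - lK.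
Proof. ring. Qed.

Lemma alg2 a dl J l2 : (a - dl) * ((J + 1) * l2) - a * (J * l2) + dl / 2 * J * l2 =
        a * l2 - (dl * l2 + dl / 2 * J * l2).
Proof. field. Qed.

Section Lower.
Variables (x0 : R) (Sf S1 : R -> R)
  (HS1 : forall sigma, derivable_pt_lim Sf sigma (S1 sigma))
  (Hdecr : forall a b, a <= b -> Sf b <= Sf a)
  (Cc lam c : nat -> Z -> R)
  (HCpos : forall j k, in_dom x0 j k -> 0 < Cc j k)
  (Hlampos : forall j k, in_dom x0 j k -> 0 < lam j k)
  (Hi : forall (C : R) (kj : nat -> Z), (forall j, in_dom x0 j (kj j)) ->
      forall eps, 0 < eps -> exists N : nat, forall j : nat, (N <= j)%nat ->
        log2 (Cc j (kj j)) / INR j + C * (log2 (lam j (kj j)) / INR j) <= eps)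
  (Hc : forall j k, in_dom x0 j k ->
      exists l, is_infimum (bound_fun Sf x0 j k (lam j k)) l /\
        Rabs (c j k) <= Cc j k * l).

Lemma unif_Hi C eps : 0 < eps -> exists N : nat, (1 <= N)%nat /\ forall j k, (N <= j)%nat -> in_dom x0 j k ->
   ln (Cc j k) + C * ln (lam j k) <= eps * INR j * ln 2.
Proof.
  intros He.
  set (Q := fun j k => log2 (Cc j k) / INR j + C * (log2 (lam j k) / INR j)).
  assert (Hex : forall j, exists k, in_dom x0 j k /\
     ((exists k', in_dom x0 j k' /\ Q j k' > eps) -> Q j k > eps)).
  { intros j. destruct (classic (exists k', in_dom x0 j k' /\ Q j k' > eps)) as [[k' Hk']|Hn].
    - exists k'. tauto.
    - destruct (dom_exists x0 j) as [k Hk]. exists k. split; auto. intros; tauto. }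
  set (kj := fun j => proj1_sig (constructive_indefinite_description _ (Hex j))).
  assert (Hkj : forall j, in_dom x0 j (kj j) /\
     ((exists k', in_dom x0 j k' /\ Q j k' > eps) -> Q j (kj j) > eps)).
  { intros j. unfold kj. destruct (constructive_indefinite_description _ (Hex j)); auto. }
  destruct (Hi C kj (fun j => proj1 (Hkj j)) eps He) as [N HN].
  exists (Datatypes.S N). split; [lia|].
  intros j k Hj Hk.
  assert (HQ : Q j k <= eps).
  { destruct (Rle_or_lt (Q j k) eps) as [H|H]; auto.
    assert (Q j (kj j) > eps) by (apply (proj2 (Hkj j)); exists k; split; auto; lra).
    assert (Q j (kj j) <= eps) by (apply HN; lia). lra. }
  unfold Q, log2 in HQ.
  assert (Hjpos : 0 < INR j) by (apply lt_0_INR; lia).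
  assert (H2 := ln2_pos).
  assert (E : ln (Cc j k) + C * ln (lam j k) = (ln (Cc j k) / ln 2 / INR j + C * (ln (lam j k) / ln 2 / INR j)) * (INR j * ln 2)).
  { field; lra. }
  rewrite E. assert (0 < INR j * ln 2) by nra. nra.
Qed.

Lemma lower sg s : s < Sf sg -> in_C2ml c x0 s (sg - s).
Proof.
  intros Hs.
  set (a0 := (Sf sg - s) / 2).
  assert (Ha0 : 0 < a0) by (unfold a0; lra).
  assert (HS1n : S1 sg <= 0) by (apply (S1_nonpos Sf S1); auto).
  destruct (HS1 sg 1 Rlt_0_1) as [d0 Hd0].
  assert (Hd0p := cond_pos d0).
  set (dl := Rmin (d0 / 2) (a0 / (1 - S1 sg))).
  assert (Hdl : 0 < dl).
  { apply Rmin_glb_lt; [lra|]. apply Rdiv_lt_0_compat; lra. }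
  assert (Hdl1 : dl <= d0 / 2) by apply Rmin_l.
  assert (Hdl2 : dl <= a0 / (1 - S1 sg)) by apply Rmin_r.
  set (sg' := sg + dl).
  set (a := Sf sg' - s).
  assert (Hdiff : Sf sg' - Sf sg >= (S1 sg - 1) * dl).
  { assert (HH := Hd0 dl). unfold sg'.
    assert (Rabs ((Sf (sg + dl) - Sf sg) / dl - S1 sg) < 1) by (apply HH; [lra| rewrite Rabs_right; lra]).
    apply Rabs_def2 in H. 
    assert (E : Sf (sg + dl) - Sf sg = ((Sf (sg + dl) - Sf sg) / dl) * dl) by (field; lra).
    rewrite E. nra. }
  assert (Hdl3 : (1 - S1 sg) * dl <= a0).
  { apply (Rmult_le_compat_l (1 - S1 sg)) in Hdl2; [|lra].
    replace ((1 - S1 sg) * (a0 / (1 - S1 sg))) with a0 in Hdl2 by (field; lra). lra. }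
  assert (Ha : a0 <= a) by (unfold a, a0 in *; lra).
  assert (Hadl : dl <= a) by nra.
  set (C := sg' - Sf sg').
  destruct (unif_Hi C (dl / 2)) as [N [HN1 HN]]; [lra|].
  set (T := fun j k => Rpower 2 (- (INR j * s)) * Rpower (1 + Rabs (IZR k - 2 ^ j * x0)) (- (sg - s))).
  assert (HT : forall j k, 0 < T j k).
  { intros. unfold T, Rpower. apply Rmult_lt_0_compat; apply exp_pos. }
  destruct (fin_all x0 (fun j k => Rabs (c j k) / T j k) N) as [M HM].
  set (K := Rmax 1 (Rmax M (exp (a * ln 2)))).
  assert (HK1 : 1 <= K) by apply Rmax_l.
  assert (HKM : M <= K) by (eapply Rle_trans; [apply Rmax_l| apply Rmax_r]).
  assert (HKa : exp (a * ln 2) <= K) by (eapply Rle_trans; [apply Rmax_r| apply Rmax_r]).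
  exists K. split; [lra|].
  intros j k Hk. fold (T j k). rewrite Rmult_assoc. fold (T j k).
  destruct (Nat.lt_ge_cases j N) as [Hj|Hj].
  - assert (HH := HM j k Hj Hk). simpl in HH.
    assert (E : Rabs (c j k) = Rabs (c j k) / T j k * T j k) by (field; specialize (HT j k); lra).
    rewrite E. apply Rmult_le_compat_r; [left; apply HT| lra].
  - destruct (Hc j k Hk) as [l [[Hl1 _] Hl2]].
    specialize (Hl1 sg').
    assert (HCk := HCpos j k Hk). assert (Hlk := Hlampos j k Hk).
    eapply Rle_trans; [apply Hl2|].
    eapply Rle_trans; [apply Rmult_le_compat_l; [lra| apply Hl1]|].
    set (dd := Rabs (IZR k - 2 ^ j * x0)).
    assert (Hdd : 0 <= dd) by apply Rabs_pos.
    assert (Hddj : dd < 2 ^ j) by exact Hk.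
    assert (HL1 : 0 <= ln (1 + dd)).
    { rewrite <- ln_1. destruct Hdd as [Hdd|Hdd]; [left; apply ln_increasing; lra| rewrite <- Hdd; right; f_equal; lra]. }
    assert (HL2 : ln (1 + dd) <= (INR j + 1) * ln 2).
    { assert (1 + dd < 2 ^ (Datatypes.S j)).
      { simpl. assert (1 <= 2 ^ j) by (apply pow_R1_Rle; lra). lra. }
      rewrite <- S_INR, <- ln_pow by lra. left; apply ln_increasing; lra. }
    assert (HQ := HN j k Hj Hk).
    assert (HJ : 0 <= INR j) by apply pos_INR.
    assert (H2 := ln2_pos).
    unfold bound_fun, T, Rpower.
    rewrite <- (exp_ln (Cc j k)) by lra. rewrite <- (exp_ln K) by lra.
    rewrite <- !exp_plus.
    apply exp_le_mono.
    unfold Rdiv. fold dd. rewrite (ln_mult (1 + dd)); [|lra|apply Rinv_0_lt_compat; lra]. rewrite ln_Rinv by lra.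
    assert (HlnK : a * ln 2 <= ln K).
    { rewrite <- (ln_exp (a * ln 2)). destruct (Rle_lt_or_eq_dec _ _ HKa) as [H|H].
      - left; apply ln_increasing; [apply exp_pos| lra].
      - rewrite H; lra. }
    assert ((a - dl) * ln (1 + dd) <= (a - dl) * ((INR j + 1) * ln 2)) by (apply Rmult_le_compat_l; lra).
    assert (0 <= dl * INR j * ln 2) by (apply Rmult_le_pos; [apply Rmult_le_pos|]; lra).
    set (L1 := ln (1 + dd)) in *. set (Ll := ln (lam j k)) in *. set (Lc := ln (Cc j k)) in *.
    set (J := INR j) in *. set (l2 := ln 2) in *.
    assert (E1 : Lc + (- (J * Sf sg') * l2 + (Sf sg' - sg') * (L1 + - Ll)) -
       (ln K + (- (J * s) * l2 + - (sg - s) * L1)) =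
       (Lc + C * Ll) + (a - dl) * L1 - a * (J * l2) - ln K).
    { unfold C, a, sg'. apply alg1. }
    assert (E2 : (a - dl) * ((J + 1) * l2) - a * (J * l2) + dl / 2 * J * l2 =
        a * l2 - (dl * l2 + dl / 2 * J * l2)) by apply alg2.
    assert (0 <= dl * l2) by nra.
    assert (0 <= dl / 2 * J * l2) by nra.
    lra.
Qed.
End Lower.


Lemma nat_unbounded X : exists n0 : nat, X < INR n0.
Proof.
  destruct (archimed X) as [H1 _].
  destruct (Z_le_gt_dec 0 (up X)) as [H|H].
  - exists (Z.to_nat (up X)). rewrite INR_IZR_INZ, Z2Nat.id by lia. lra.
  - exists 0%nat. simpl. apply Z.gt_lt in H. apply IZR_lt in H. lra.
Qed.

Lemma ln3_pos : 0 < ln 3.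
Proof. rewrite <- ln_1. apply ln_increasing; lra. Qed.

Lemma alg3 Sv s sg rho : (- Sv + (Sv - sg) * rho) - (- s + (s - sg) * rho) = (s - Sv) * (1 - rho).
Proof. ring. Qed.

Lemma alg4 P J l2 Sp sp u : P = J * l2 -> - (J * Sp) * l2 + (Sp - sp) * (P * u) = P * (- Sp + (Sp - sp) * u).
Proof. intros ->. ring. Qed.

Lemma alg5 P sg s r e : P = P -> (s - sg) * (P * r + e) = P * ((s - sg) * r) + (s - sg) * e.
Proof. intros. ring. Qed.

Section Upper.
Variables (x0 : R) (Sf S1 S2 : R -> R)
  (HS1 : forall sigma, derivable_pt_lim Sf sigma (S1 sigma))
  (HS2 : forall sigma, derivable_pt_lim S1 sigma (S2 sigma))
  (Hdecr : forall a b, a <= b -> Sf b <= Sf a)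
  (Hconc : forall sigma, S2 sigma < 0)
  (mof : nat -> nat) (Hmof : infinite_partition mof)
  (r : nat -> R)
  (Hr_in : forall m, exists sigma, r m = S1 sigma / (S1 sigma - 1))
  (Hr_dense : forall sigma eps, 0 < eps ->
      exists m, Rabs (r m - S1 sigma / (S1 sigma - 1)) < eps)
  (Cc lam c : nat -> Z -> R)
  (HCpos : forall j k, in_dom x0 j k -> 0 < Cc j k)
  (Hlampos : forall j k, in_dom x0 j k -> 0 < lam j k)
  (Hii : forall (phi : nat -> nat) (kn : nat -> Z),
      (forall n, (phi n < phi (Datatypes.S n))%nat) ->
      (forall n, in_dom x0 (phi n) (kn n) /\ in_I mof r x0 (phi n) (kn n)) ->
      Un_cv (fun n => log2 (Cc (phi n) (kn n)) / INR (phi n)) 0 /\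
      Un_cv (fun n => log2 (lam (phi n) (kn n)) / INR (phi n)) 0)
  (HcI : forall j k, in_dom x0 j k -> in_I mof r x0 j k ->
      exists l, is_infimum (bound_fun Sf x0 j k (lam j k)) l /\
        Rabs (c j k) = Cc j k * l).

Lemma upper sg s : in_C2ml c x0 s (sg - s) -> s <= Sf sg.
Proof.
  intros [K [HK HC]].
  destruct (Rle_or_lt s (Sf sg)) as [H|Hlt]; auto. exfalso.
  set (rh := rho S1 sg).
  destruct (rho_bounds Sf S1 HS1 Hdecr sg) as [Hrh0 Hrh1]. fold rh in Hrh0, Hrh1.
  set (mu := (s - Sf sg) * (1 - rh)).
  assert (Hmu : 0 < mu) by (unfold mu; nra).
  set (G := hh Sf sg rh).
  assert (HG : G - (- s + (s - sg) * rh) = mu) by (unfold G, hh, mu; apply alg3).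
  destruct (Lcont Sf S1 S2 HS1 HS2 Hdecr Hconc sg (mu / 4)) as [dl [Hdl Hcont]]; [lra|].
  fold rh G in Hcont.
  set (ss := Rabs (s - sg)).
  assert (Hss : 0 <= ss) by apply Rabs_pos.
  set (d1 := Rmin (dl / 3) (mu / (4 * (ss + 1)))).
  assert (Hd1 : 0 < d1). { apply Rmin_glb_lt; [lra|]. apply Rdiv_lt_0_compat; lra. }
  destruct (Hr_dense sg d1 Hd1) as [m Hm]. fold (rho S1 sg) rh in Hm.
  assert (Hrm : 0 <= r m < 1).
  { destruct (Hr_in m) as [sm Hsm]. rewrite Hsm. apply (rho_bounds Sf S1 HS1 Hdecr). }
  assert (Hg : forall p, exists j, (Datatypes.S p <= j)%nat /\ mof j = m) by (intros; apply Hmof).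
  set (g := fun p => proj1_sig (constructive_indefinite_description _ (Hg p))).
  assert (Hg' : forall p, (Datatypes.S p <= g p)%nat /\ mof (g p) = m).
  { intros p. unfold g. destruct (constructive_indefinite_description _ (Hg p)); auto. }
  set (phi := fun n => nat_rect (fun _ => nat) (g 0%nat) (fun _ q => g q) n).
  assert (Hphi1 : forall n, (phi n < phi (Datatypes.S n))%nat).
  { intros n. change (phi (Datatypes.S n)) with (g (phi n)). apply Hg'. }
  assert (Hphi2 : forall n, mof (phi n) = m).
  { intros [|n]; [apply Hg'| change (phi (Datatypes.S n)) with (g (phi n)); apply Hg']. }
  assert (Hphi3 : forall n, (Datatypes.S n <= phi n)%nat).
  { induction n; [apply Hg'|]. specialize (Hphi1 n). lia. }
  assert (Hkex : forall n, exists k, in_dom x0 (phi n) k /\ in_I mof r x0 (phi n) k).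
  { intros n. unfold in_I. rewrite Hphi2.
    assert (HJ : 1 <= INR (phi n)) by (rewrite <- INR_1; apply le_INR; specialize (Hphi3 n); lia).
    destruct (I_exists x0 (phi n) (Rpower 2 (INR (phi n) * r m))) as [k Hk].
    - specialize (Hphi3 n); lia.
    - split; [unfold Rpower; left; apply exp_pos|].
      rewrite <- Rpower_pow by lra. apply Rpower_lt; [lra|]. nra.
    - exists k; auto. }
  set (kn := fun n => proj1_sig (constructive_indefinite_description _ (Hkex n))).
  assert (Hkn : forall n, in_dom x0 (phi n) (kn n) /\ in_I mof r x0 (phi n) (kn n)).
  { intros n. unfold kn. destruct (constructive_indefinite_description _ (Hkex n)); auto. }
  destruct (Hii phi kn Hphi1 Hkn) as [HA HB].
  destruct (HA (mu / 8)) as [N1 HN1]; [lra|].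
  destruct (HB (dl / 3)) as [N2 HN2]; [lra|].
  assert (Hl2 := ln2_pos). assert (Hl3 := ln3_pos).
  set (W := Rabs (ln K) + (ss + 1) * ln 3 + 1).
  assert (HW : 0 < W) by (unfold W; pose proof (Rabs_pos (ln K)); nra).
  destruct (nat_unbounded (W * (8 / mu + 3 / dl) / ln 2)) as [n0 Hn0].
  set (n := (N1 + N2 + n0)%nat).
  specialize (HN1 n ltac:(unfold n; lia)). specialize (HN2 n ltac:(unfold n; lia)).
  unfold Rdist in HN1, HN2. rewrite Rminus_0_r in HN1, HN2.
  set (j := phi n) in *. set (k := kn n) in *.
  destruct (Hkn n) as [Hdom HI0]. fold j k in Hdom, HI0. assert (HI := HI0).
  unfold in_I in HI. assert (Hmj : mof j = m) by apply Hphi2. rewrite Hmj in HI.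
  set (J := INR j) in *.
  assert (HJn : INR n0 <= J) by (unfold J, j; apply le_INR; specialize (Hphi3 n); unfold n in *; lia).
  assert (HJ1 : 1 <= J) by (unfold J, j; rewrite <- INR_1; apply le_INR; specialize (Hphi3 n); lia).
  set (P := J * ln 2).
  assert (HP : 0 < P) by (unfold P; nra).
  assert (HPW : W * (8 / mu + 3 / dl) < P).
  { unfold P. apply (Rmult_lt_reg_r (/ ln 2)); [apply Rinv_0_lt_compat; lra|].
    replace (J * ln 2 * / ln 2) with J by (field; lra). unfold Rdiv in Hn0. lra. }
  assert (HPW1 : W < P * (mu / 8)).
  { assert (W * (8 / mu) <= W * (8 / mu + 3 / dl)).
    { apply Rmult_le_compat_l; [lra|]. assert (0 < 3 / dl) by (apply Rdiv_lt_0_compat; lra). lra. }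
    assert (E : P * (mu / 8) = (P / (8 / mu))) by (field; lra).
    rewrite E. apply (Rmult_lt_reg_r (8 / mu)); [apply Rdiv_lt_0_compat; lra|].
    unfold Rdiv at 2. rewrite Rmult_assoc, Rinv_l, Rmult_1_r; [lra|].
    assert (0 < 8 / mu) by (apply Rdiv_lt_0_compat; lra). lra. }
  assert (HPW2 : W < P * (dl / 3)).
  { assert (W * (3 / dl) <= W * (8 / mu + 3 / dl)).
    { apply Rmult_le_compat_l; [lra|]. assert (0 < 8 / mu) by (apply Rdiv_lt_0_compat; lra). lra. }
    assert (E : P * (dl / 3) = (P / (3 / dl))) by (field; lra).
    rewrite E. apply (Rmult_lt_reg_r (3 / dl)); [apply Rdiv_lt_0_compat; lra|].
    unfold Rdiv at 2. rewrite Rmult_assoc, Rinv_l, Rmult_1_r; [lra|].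
    assert (0 < 3 / dl) by (apply Rdiv_lt_0_compat; lra). lra. }
  set (d := Rabs (IZR k - 2 ^ j * x0)) in *.
  set (t := Rpower 2 (J * r m)) in *.
  assert (Hdt : t - 1 < d < t + 1).
  { destruct (base_Int_part d) as [A1 A2]. destruct (base_Int_part t) as [B1 B2].
    rewrite HI in A1, A2. lra. }
  assert (Hd0 : 0 <= d) by apply Rabs_pos.
  assert (Hlnt : ln t = P * r m).
  { unfold t, Rpower. rewrite ln_exp. unfold P. field. }
  assert (Ht1 : 1 <= t).
  { unfold t, Rpower. rewrite <- exp_0. apply exp_le_mono.
    assert (0 <= J * r m) by nra. nra. }
  set (L1 := ln (1 + d)).
  assert (HL1a : P * r m < L1).
  { rewrite <- Hlnt. apply ln_increasing; lra. }
  assert (HL1b : L1 < ln 3 + P * r m).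
  { rewrite <- Hlnt, <- ln_mult by lra. apply ln_increasing; lra. }
  assert (HCk := HCpos j k Hdom). assert (Hlk := Hlampos j k Hdom).
  set (Ll := ln (lam j k)). set (Lc := ln (Cc j k)).
  assert (EB : log2 (lam j k) / J = Ll / P) by (unfold log2, Ll, P; field; lra).
  assert (EA : log2 (Cc j k) / J = Lc / P) by (unfold log2, Lc, P; field; lra).
  rewrite EB in HN2. rewrite EA in HN1.
  set (e := L1 - P * r m).
  set (u := (L1 - Ll) / P).
  assert (Eu : u - rh = e / P + (r m - rh) - Ll / P) by (unfold u, e; field; lra).
  assert (He1 : e / P < dl / 3).
  { apply (Rmult_lt_reg_r P); [lra|]. replace (e / P * P) with e by (field; lra).
    unfold W in HPW2. pose proof (Rabs_pos (ln K)). unfold e. nra. }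
  assert (He0 : 0 < e / P) by (apply Rdiv_lt_0_compat; unfold e; lra).
  assert (Hd1a : d1 <= dl / 3) by apply Rmin_l.
  assert (Hd1b : d1 <= mu / (4 * (ss + 1))) by apply Rmin_r.
  apply Rabs_def2 in Hm. apply Rabs_def2 in HN2. apply Rabs_def2 in HN1.
  assert (Hu : Rabs (u - rh) < dl) by (rewrite Eu; apply Rabs_def1; lra).
  destruct (HcI j k Hdom HI0) as [l [[Hinf1 Hinf2] Hceq]].
  assert (Hlow : exp (P * (G - mu / 4)) <= l).
  { apply Hinf2. intros sg'. unfold bound_fun, Rpower. rewrite <- exp_plus. apply exp_le_mono.
    fold d. unfold Rdiv. rewrite (ln_mult (1 + d)); [|lra|apply Rinv_0_lt_compat; lra].
    rewrite ln_Rinv by lra. fold L1 Ll.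
    replace (L1 + - Ll) with (P * u) by (unfold u; field; lra).
    fold J. rewrite (alg4 P J (ln 2) (Sf sg') sg' u) by reflexivity.
    apply Rmult_le_compat_l; [lra|]. apply Hcont; auto. }
  assert (HCb := HC j k Hdom). fold d in HCb.
  assert (Hineq : Cc j k * exp (P * (G - mu / 4)) <= K * Rpower 2 (- (J * s)) * Rpower (1 + d) (- (sg - s))).
  { eapply Rle_trans; [|apply HCb]. rewrite Hceq. apply Rmult_le_compat_l; lra. }
  unfold Rpower in Hineq.
  rewrite <- (exp_ln (Cc j k)), <- (exp_ln K) in Hineq by lra.
  rewrite <- !exp_plus in Hineq. apply exp_le_rev in Hineq. fold Lc L1 in Hineq.
  assert (F2 : - (mu / 8) * P <= Lc).
  { replace Lc with (Lc / P * P) by (field; lra). nra. }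
  assert (F3 : ln K < P * (mu / 8)).
  { pose proof (Rle_abs (ln K)). unfold W in HPW1. nra. }
  assert (F4 : (s - sg) * e <= ss * ln 3).
  { assert ((s - sg) * e <= ss * e).
    { apply Rmult_le_compat_r; [unfold e; lra| apply Rle_abs]. }
    assert (ss * e <= ss * ln 3) by (apply Rmult_le_compat_l; unfold e; lra). lra. }
  assert (F5 : ss * ln 3 < P * (mu / 8)) by (unfold W in HPW1; pose proof (Rabs_pos (ln K)); nra).
  assert (F6 : (s - sg) * (r m - rh) <= mu / 4).
  { assert ((s - sg) * (r m - rh) <= ss * Rabs (r m - rh)).
    { eapply Rle_trans; [apply Rle_abs|]. rewrite Rabs_mult. apply Rle_refl. }
    assert (ss * Rabs (r m - rh) <= ss * d1).
    { apply Rmult_le_compat_l; auto. apply Rabs_le; lra. }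
    assert (ss * d1 <= ss * (mu / (4 * (ss + 1)))) by (apply Rmult_le_compat_l; auto).
    assert (ss * (mu / (4 * (ss + 1))) <= mu / 4).
    { replace (ss * (mu / (4 * (ss + 1)))) with ((mu / 4) * (ss / (ss + 1))) by (field; lra).
      assert (ss / (ss + 1) <= 1).
      { apply (Rmult_le_reg_r (ss + 1)); [lra|]. replace (ss / (ss + 1) * (ss + 1)) with ss by (field; lra). lra. }
      assert (0 <= ss / (ss + 1)) by (apply Rmult_le_pos; [lra| left; apply Rinv_0_lt_compat; lra]).
      nra. }
    lra. }
  assert (F7 : P * ((s - sg) * (r m - rh)) <= P * (mu / 4)) by (apply Rmult_le_compat_l; lra).
  assert (E1 : - (J * s) * ln 2 = - (P * s)) by (unfold P; ring).
  assert (E2 : - (sg - s) * L1 = P * ((s - sg) * r m) + (s - sg) * e) by (unfold e; ring).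
  assert (E3 : P * (G - mu / 4) = P * (- s) + P * ((s - sg) * rh) + P * mu - P * (mu / 4)).
  { replace G with (- s + (s - sg) * rh + mu) by lra. ring. }
  assert (E4 : P * ((s - sg) * (r m - rh)) = P * ((s - sg) * r m) - P * ((s - sg) * rh)) by ring.
  assert (E5 : P * (mu / 8) * 5 <= P * (mu / 8) * 4 -> False).
  { intros. assert (0 < P * (mu / 8)) by nra. lra. }
  apply E5. 
  assert (E6 : P * mu = 8 * (P * (mu / 8))) by field.
  assert (E7 : P * (mu / 4) = 2 * (P * (mu / 8))) by field.
  assert (E8 : P * (- s) = - (P * s)) by ring.
  lra.
Qed.
End Upper.

Theorem theorem2p1
  (x0 : R) (S S1 S2 : R -> R)
  (HS1 : forall sigma, derivable_pt_lim S sigma (S1 sigma))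
  (HS2 : forall sigma, derivable_pt_lim S1 sigma (S2 sigma))
  (Hdecr : forall a b, a <= b -> S b <= S a)
  (Hconc : forall sigma, S2 sigma < 0)
  (mof : nat -> nat) (Hmof : infinite_partition mof)
  (r : nat -> R)
  (Hr_in : forall m, exists sigma, r m = S1 sigma / (S1 sigma - 1))
  (Hr_dense : forall sigma eps, 0 < eps ->
      exists m, Rabs (r m - S1 sigma / (S1 sigma - 1)) < eps)
  (Cc lam c : nat -> Z -> R)
  (HCpos : forall j k, in_dom x0 j k -> 0 < Cc j k)
  (Hlampos : forall j k, in_dom x0 j k -> 0 < lam j k)
  (Hi : forall (C : R) (kj : nat -> Z), (forall j, in_dom x0 j (kj j)) ->
      forall eps, 0 < eps -> exists N : nat, forall j : nat, (N <= j)%nat ->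
        log2 (Cc j (kj j)) / INR j + C * (log2 (lam j (kj j)) / INR j) <= eps)
  (Hii : forall (phi : nat -> nat) (kn : nat -> Z),
      (forall n, (phi n < phi (Datatypes.S n))%nat) ->
      (forall n, in_dom x0 (phi n) (kn n) /\ in_I mof r x0 (phi n) (kn n)) ->
      Un_cv (fun n => log2 (Cc (phi n) (kn n)) / INR (phi n)) 0 /\
      Un_cv (fun n => log2 (lam (phi n) (kn n)) / INR (phi n)) 0)
  (Hc : forall j k, in_dom x0 j k ->
      exists l, is_infimum (bound_fun S x0 j k (lam j k)) l /\
        Rabs (c j k) <= Cc j k * l)
  (HcI : forall j k, in_dom x0 j k -> in_I mof r x0 j k ->
      exists l, is_infimum (bound_fun S x0 j k (lam j k)) l /\
        Rabs (c j k) = Cc j k * l) :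
  frontier_is c x0 S.

Proof.
  intros sg. split.
  - intros s Hs. apply (upper x0 S S1 S2 HS1 HS2 Hdecr Hconc mof Hmof r Hr_in Hr_dense Cc lam c HCpos Hlampos Hii HcI sg s Hs).
  - intros b Hb. destruct (Rle_or_lt (S sg) b) as [H|H]; auto. exfalso.
    assert (Hm : in_C2ml c x0 ((b + S sg) / 2) (sg - (b + S sg) / 2)).
    { apply (lower x0 S S1 HS1 Hdecr Cc lam c HCpos Hlampos Hi Hc). lra. }
    apply Hb in Hm. lra.
Qed.
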